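(* Let $A,B$ be idempotent torsion-free $\Gamma$-graded rings and let $F:A\text{-gr}\to B\text{-gr}$ and $G:B\text{-gr}\to A\text{-gr}$ be inverse graded category equivalences. Set $P=G(B)$ and $Q=F(A)$, with right actions $p\cdot b=G(\rho_b)(p)$ for $p\in P$, $b\in B$ and $q\cdot a=F(\rho_a)(q)$ for $q\in Q$, $a\in A$. Then ${}_AP_B$ and ${}_BQ_A$ are graded bimodules, and moreover (i) ${}_AP\in A\text{-gr}$ and $P_B\in\text{gr-}B$; (ii) ${}_BQ\in B\text{-gr}$ and $Q_A\in\text{gr-}A$.
   Context: $\Gamma$ is a fixed multiplicative group. Rings are associative $\Gamma$-graded, not necessarily unital. $A$ is idempotent if $A^2=A$, torsion-free if $Aa=0\Rightarrow a=0$ and $aA=0\Rightarrow a=0$. A graded module is unital if $AM=M$ (right: $MA=M$), torsion-free if $Am=0\Rightarrow m=0$ (right: $mA=0\Rightarrow m=0$). $A\text{-gr}$ (resp. $\text{gr-}A$) is the category of unital torsion-free graded left (resp. right) $A$-modules with degree-preserving maps; note $A\in A\text{-gr}$, $B\in B\text{-gr}$. Suspension: $M(\sigma)_\tau=M_{\tau\sigma}$. A graded functor is an additive functor with $F(M(\sigma))=F(M)(\sigma)$ commuting with suspensions; a graded category equivalence is a graded functor which is an equivalence. A left-linear $f$ is graded of degree $\sigma$ if $f(M_\tau)\subseteq N_{\tau\sigma}$; since $\mathrm{HOM}_A(M,N)_\sigma=\mathrm{Hom}_{A\text{-gr}}(M(\sigma^{-1}),N)$, $F$ induces a map $\mathrm{HOM}_A(M,N)\to\mathrm{HOM}_B(F(M),F(N))$,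 still denoted $F$. For $a\in A$, $\rho_a:A\to A$ is right multiplication $x\mapsto xa$, a graded endomorphism of ${}_AA$; similarly $\rho_b$ for $b\in B$. *)

(* Defs.v *)
From HB Require Import structures.
From mathcomp Require Import all_boot all_order all_algebra.
From Stdlib Require List.
Set Implicit Arguments.
Unset Strict Implicit.
Unset Printing Implicit Defensive.
Import GRing.Theory.
Local Open Scope ring_scope.

Record grp := Grp {
  gT :> Type;
  gmul : gT -> gT -> gT;
  g1 : gT;
  ginv : gT -> gT;
  gmulA : forall x y z, gmul x (gmul y z) = gmul (gmul x y) z;
  gmul1g : forall x, gmul g1 x = x;
  gmulg1 : forall x, gmul x g1 = x;
  gmulVg : forall x, gmul (ginv x) x = g1;
  gmulgV : forall x, gmul x (ginv x) = g1 }.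

Lemma gmulVK (G : grp) (x s : G) : gmul (gmul x (ginv s)) s = x.
Proof. by rewrite -gmulA gmulVg gmulg1. Qed.
Lemma gmulKV (G : grp) (x s : G) : gmul (gmul x s) (ginv s) = x.
Proof. by rewrite -gmulA gmulgV gmulg1. Qed.

(* ---------- gradings: M = (+)_s M_s, given by the projections comp s ----------
   x is homogeneous of degree s  iff  comp s x = x  (i.e. x \in M_s).          *)
Definition graded_axioms (G : grp) (M : zmodType) (comp : G -> M -> M)
  (supp : M -> seq G) : Prop :=
  (forall s x y, comp s (x + y) = comp s x + comp s y) /\
  (forall s x, comp s (comp s x) = comp s x) /\
  (forall s t x, s <> t -> comp t (comp s x) = 0) /\
  (forall x, x = \sum_(s <- supp x) comp s x) /\
  (forall x, List.NoDup (supp x)) /\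
  (forall s x, ~ List.In s (supp x) -> comp s x = 0).

Record grring (G : grp) := GrRing {
  rcar :> zmodType;
  rmul : rcar -> rcar -> rcar;
  rcomp : G -> rcar -> rcar;
  rsupp : rcar -> seq G;
  rgraded : graded_axioms rcomp rsupp;
  rmulDl : forall a b c, rmul (a + b) c = rmul a c + rmul b c;
  rmulDr : forall a b c, rmul a (b + c) = rmul a b + rmul a c;
  rmulA : forall a b c, rmul a (rmul b c) = rmul (rmul a b) c;
  rmul_hom : forall s t a b, rcomp s a = a -> rcomp t b = b ->
               rcomp (gmul s t) (rmul a b) = rmul a b }.

Definition ring_idempotent (G : grp) (A : grring G) : Prop :=
  forall a : A, exists l : seq (A * A), a = \sum_(p <- l) rmul p.1 p.2.
Definition torsionfree (G : grp) (A : grring G) : Prop :=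
  (forall a : A, (forall x : A, rmul x a = 0) -> a = 0) /\
  (forall a : A, (forall x : A, rmul a x = 0) -> a = 0).

Definition left_unital (G : grp) (A : grring G) (M : zmodType) (act : A -> M -> M) :=
  forall m : M, exists l : seq (A * M), m = \sum_(p <- l) act p.1 p.2.
Definition left_torsionfree (G : grp) (A : grring G) (M : zmodType)
  (act : A -> M -> M) := forall m : M, (forall a : A, act a m = 0) -> m = 0.

(* ---------- objects of A-gr: unital torsion-free graded left A-modules ---------- *)
Record grmod (G : grp) (A : grring G) := GrMod {
  mcar :> zmodType;
  mact : A -> mcar -> mcar;
  mcomp : G -> mcar -> mcar;
  msupp : mcar -> seq G;
  mgraded : graded_axioms mcomp msupp;
  mactDl : forall (a b : A) m, mact (a + b) m = mact a m + mact b m;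
  mactDr : forall (a : A) m n, mact a (m + n) = mact a m + mact a n;
  mactA : forall (a b : A) m, mact (rmul a b) m = mact a (mact b m);
  mact_hom : forall s t (a : A) m, rcomp s a = a -> mcomp t m = m ->
               mcomp (gmul s t) (mact a m) = mact a m;
  munital : left_unital mact;
  mtf : left_torsionfree mact }.
Arguments mact {G A} M _ _ : rename.
Arguments mcomp {G A} M _ _ : rename.
Arguments msupp {G A} M _ : rename.

Record grhom (G : grp) (A : grring G) (M N : grmod A) := GrHom {
  hfun :> M -> N;
  hadd : forall x y, hfun (x + y) = hfun x + hfun y;
  hlin : forall (a : A) x, hfun (mact M a x) = mact N a (hfun x);
  hdeg : forall t x, mcomp M t x = x -> mcomp N t (hfun x) = hfun x }.

(* ---------- suspension M(s)_t = M_{ts} ---------- *)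
Section Susp.
Variables (G : grp) (A : grring G) (M : grmod A) (s : G).

Definition susp_comp (t : G) (x : M) : M := mcomp M (gmul t s) x.
Definition susp_supp (x : M) : seq G := map (fun r => gmul r (ginv s)) (msupp M x).

Lemma In_seqmap (T U : Type) (f : T -> U) (x : T) (l : seq T) :
  List.In x l -> List.In (f x) (map f l).
Proof. elim: l => //= y l IH [->|H]; [by left | right; exact: IH]. Qed.

Lemma In_seqmap_inv (T U : Type) (f : T -> U) (y : U) (l : seq T) :
  List.In y (map f l) -> exists x, f x = y /\ List.In x l.
Proof.
elim: l => //= x l IH [<-|H]; first by exists x; split; [|left].
by have [z [hz hin]] := IH H; exists z; split; [|right].
Qed.

Lemma NoDup_seqmap (T U : Type) (f : T -> U) (l : seq T) :
  (forall a b, f a = f b -> a = b) -> List.NoDup l -> List.NoDup (map f l).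
Proof.
move=> inj; elim: l => [|x l IH] /= H; first by constructor.
inversion H; subst; constructor; last by apply: IH.
move=> hin; have [z [e hz]] := In_seqmap_inv hin; have ez := inj _ _ e; subst z; contradiction.
Qed.

Lemma susp_graded : graded_axioms susp_comp susp_supp.
Proof.
have [h1 [h2 [h3 [h4 [h5 h6]]]]] := mgraded M.
split; [|split; [|split; [|split; [|split]]]].
- by move=> t x y; apply: h1.
- by move=> t x; apply: h2.
- move=> t u x ne; apply: h3 => e; apply: ne.
  by rewrite -(gmulKV t s) e gmulKV.
- move=> x; rewrite /susp_supp big_map {1}(h4 x); apply: eq_bigr => r _.
  by rewrite /susp_comp gmulVK.
- move=> x; apply: NoDup_seqmap => [a b e|]; last exact: h5.
  by rewrite -(gmulVK a s) e gmulVK.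
- move=> t x nin; apply: h6 => hin; apply: nin.
  by rewrite /susp_supp -{1}(gmulKV t s); apply: (In_seqmap (fun r => gmul r (ginv s))).
Qed.

Lemma susp_act_hom : forall u t (a : A) m, rcomp u a = a -> susp_comp t m = m ->
  susp_comp (gmul u t) (mact M a m) = mact M a m.
Proof.
by move=> u t a m ha hm; rewrite /susp_comp -gmulA; apply: mact_hom.
Qed.

Definition susp : grmod A :=
  @GrMod G A M (mact M) susp_comp susp_supp susp_graded
    (@mactDl G A M) (@mactDr G A M) (@mactA G A M) susp_act_hom
    (@munital G A M) (@mtf G A M).

End Susp.

Section SuspHom.
Variables (G : grp) (A : grring G) (M N : grmod A) (f : grhom M N) (s : G).
Lemma susp_hom_deg : forall t (x : susp M s), mcomp (susp M s) t x = x ->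
  mcomp (susp N s) t (f x) = f x.
Proof. by move=> t x; apply: (hdeg f). Qed.
Definition susp_hom : grhom (susp M s) (susp N s) :=
  @GrHom G A (susp M s) (susp N s) (hfun f) (@hadd G A M N f) (@hlin G A M N f)
    susp_hom_deg.
End SuspHom.

Definition ocast (G : grp) (A : grring G) (M N : grmod A) (e : M = N) (x : M) : N :=
  match e in _ = N' return mcar N' with erefl => x end.

Record grfunctor (G : grp) (A B : grring G) := GrFunctor {
  fobj : grmod A -> grmod B;
  fmor : forall M N : grmod A, grhom M N -> grhom (fobj M) (fobj N);
  fadd : forall M N (f g h : grhom M N), (forall x, h x = f x + g x) ->
           forall y, fmor h y = fmor f y + fmor g y;
  fid : forall M (f : grhom M M), (forall x, f x = x) -> forall y, fmor f y = y;
  fcomp : forall M N L (f : grhom M N) (g : grhom N L) (h : grhom M L),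
            (forall x, h x = g (f x)) -> forall y, fmor h y = fmor g (fmor f y);
  fsusp : forall M s, fobj (susp M s) = susp (fobj M) s;
  fsusp_hom : forall M N (f : grhom M N) s (y : fobj (susp M s)),
      fmor (susp_hom f s) y =
      ocast (esym (fsusp N s)) (fmor f (ocast (fsusp M s) y) : susp (fobj N) s) }.

Definition nat_iso_id (G : grp) (A : grring G) (H : grmod A -> grmod A)
  (Hm : forall M N, grhom M N -> grhom (H M) (H N)) : Prop :=
  exists (eta : forall M, grhom (H M) M) (eta' : forall M, grhom M (H M)),
    [/\ forall M x, eta M (eta' M x) = x,
        forall M x, eta' M (eta M x) = x &
        forall M N (f : grhom M N) x, f (eta M x) = eta N (Hm M N f x)].

Definition inverse_equivalences (G : grp) (A B : grring G)
  (F : grfunctor A B) (H : grfunctor B A) : Prop :=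
  @nat_iso_id G A (fun M => fobj H (fobj F M)) (fun M N f => fmor H (fmor F f)) /\
  @nat_iso_id G B (fun M => fobj F (fobj H M)) (fun M N f => fmor F (fmor H f)).

Section Regular.
Variables (G : grp) (A : grring G) (iA : ring_idempotent A) (tA : torsionfree A).
Definition regmod : grmod A :=
  @GrMod G A A (@rmul G A) (@rcomp G A) (@rsupp G A) (@rgraded G A)
    (@rmulDl G A) (@rmulDr G A) (fun a b m => esym (@rmulA G A a b m))
    (@rmul_hom G A) iA (proj1 tA).

(* rho_c : x |-> x c for c = b_s (the degree-s component of b); a graded map of
   degree s, i.e. a morphism A(s^-1) -> A in A-gr *)
Variables (b : A) (s : G).
Lemma rho_add (x y : A) : rmul (x + y) (rcomp s b) = rmul x (rcomp s b) + rmul y (rcomp s b).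
Proof. exact: rmulDl. Qed.
Lemma rho_lin (a x : A) : rmul (rmul a x) (rcomp s b) = rmul a (rmul x (rcomp s b)).
Proof. by rewrite rmulA. Qed.
Lemma rho_deg : forall t (x : susp regmod (ginv s)),
  mcomp (susp regmod (ginv s)) t x = x ->
  mcomp regmod t (rmul x (rcomp s b)) = rmul x (rcomp s b).
Proof.
move=> t x hx; have [_ [h2 _]] := rgraded A.
by rewrite /= -{1}(gmulVK t s); apply: rmul_hom => //; apply: h2.
Qed.
Definition rho_comp : grhom (susp regmod (ginv s)) regmod :=
  @GrHom G A (susp regmod (ginv s)) regmod (fun x => rmul x (rcomp s b))
    rho_add rho_lin rho_deg.
End Regular.

(* the right action on P = H(A) :  p . b = H(rho_b)(p) = sum_s H(rho_{b_s})(p) *)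
Definition ract (G : grp) (A B : grring G) (iA : ring_idempotent A) (tA : torsionfree A)
  (H : grfunctor A B) (p : fobj H (regmod iA tA)) (b : A) : fobj H (regmod iA tA) :=
  \sum_(s <- rsupp b)
     fmor H (rho_comp iA tA b s)
       (ocast (esym (fsusp H (regmod iA tA) (ginv s))) p).

Definition gr_bimodule (G : grp) (A B : grring G) (P : grmod A)
  (ra : P -> B -> P) : Prop :=
  [/\ forall p q b, ra (p + q) b = ra p b + ra q b,
      forall p (b c : B), ra p (b + c) = ra p b + ra p c,
      forall p (b c : B), ra (ra p b) c = ra p (rmul b c),
      forall s t p (b : B), mcomp P s p = p -> rcomp t b = b ->
        mcomp P (gmul s t) (ra p b) = ra p b &
      forall (a : A) p (b : B), mact P a (ra p b) = ra (mact P a p) b].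

Definition right_unital (G : grp) (B : grring G) (M : zmodType) (ra : M -> B -> M) :=
  forall m : M, exists l : seq (M * B), m = \sum_(p <- l) ra p.1 p.2.
Definition right_torsionfree (G : grp) (B : grring G) (M : zmodType)
  (ra : M -> B -> M) := forall m : M, (forall b : B, ra m b = 0) -> m = 0.

(* Main.v *)
Require Import Defs.
From HB Require Import structures.
From mathcomp Require Import all_boot all_order all_algebra.
From Stdlib Require Import ClassicalEpsilon ProofIrrelevance FunctionalExtensionality PropExtensionality Classical.
Set Implicit Arguments.
Unset Strict Implicit.
Unset Printing Implicit Defensive.
Import GRing.Theory.
Local Open Scope ring_scope.

Lemma sum_In0 (V : zmodType) (T : Type) (l : seq T) (f : T -> V) :
  (forall s, List.In s l -> f s = 0) -> \sum_(s <- l) f s = 0.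
Proof.
elim: l => [|x l IH] H; first by rewrite big_nil.
rewrite big_cons H /=; last by left.
by rewrite IH ?add0r // => s hs; apply: H; right.
Qed.

Lemma sum_single (V : zmodType) (T : Type) (l : seq T) (f : T -> V) (t : T) :
  List.NoDup l -> (forall s, s <> t -> f s = 0) -> (~ List.In t l -> f t = 0) ->
  \sum_(s <- l) f s = f t.
Proof.
elim: l => [|x l IH] nd H1 H2; first by rewrite big_nil H2.
inversion nd; subst.
rewrite big_cons.
case: (classic (x = t)) => [ext|nxt].
  subst x; rewrite sum_In0 ?addr0 // => s hs; apply: H1 => est; subst; contradiction.
rewrite H1 // add0r IH // => nin; apply: H2 => /= [[e|h]] //.
Qed.

Lemma dedup_ex (T : Type) (l : seq T) :
  exists l', List.NoDup l' /\ forall s, List.In s l <-> List.In s l'.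
Proof.
elim: l => [|x l [l' [nd H]]]; first by exists [::]; split => //; constructor.
case: (classic (List.In x l')) => hx.
  exists l'; split => // s /=; split; [case=> [<-|/H] // | move=> /H; tauto].
exists (x :: l'); split; first by constructor.
move=> s /=; split; case=> [->|/H]; tauto.
Qed.

Lemma hom0 (M N : zmodType) (f : M -> N) :
  (forall x y, f (x + y) = f x + f y) -> f 0 = 0.
Proof.
move=> fD; have h := fD 0 0; rewrite addr0 in h.
by apply: (addrI (f 0)); rewrite addr0 -h.
Qed.

Lemma sum_hom (M N : zmodType) (T : Type) (f : M -> N) (l : seq T) (F : T -> M) :
  (forall x y, f (x + y) = f x + f y) ->
  f (\sum_(s <- l) F s) = \sum_(s <- l) f (F s).
Proof.
move=> fD; elim: l => [|x l IH]; first by rewrite !big_nil (hom0 fD).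
by rewrite !big_cons fD IH.
Qed.

Lemma homN (M N : zmodType) (f : M -> N) :
  (forall x y, f (x + y) = f x + f y) -> forall x, f (- x) = - f x.
Proof.
move=> fD x; apply/eqP; rewrite -subr_eq0 opprK -fD addNr; apply/eqP; exact: hom0.
Qed.

Section Graded.
Variables (G : grp) (M : zmodType) (c : G -> M -> M) (sp : M -> seq G).
Hypothesis g : graded_axioms c sp.

Lemma gcD s x y : c s (x + y) = c s x + c s y.
Proof. by case: g. Qed.
Lemma gc0 s : c s 0 = 0.
Proof. exact: (hom0 (gcD s)). Qed.
Lemma gcN s x : c s (- x) = - c s x.
Proof. exact: (homN (gcD s)). Qed.
Lemma gcc s x : c s (c s x) = c s x.
Proof. by case: g => _ []. Qed.
Lemma gcorth s t x : s <> t -> c t (c s x) = 0.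
Proof. by case: g => _ [_ []] H _; apply: H. Qed.
Lemma gdec x : x = \sum_(s <- sp x) c s x.
Proof. by case: g => _ [_ [_ []]]. Qed.
Lemma gnodup x : List.NoDup (sp x).
Proof. by case: g => _ [_ [_ [_ []]]]. Qed.
Lemma gnin s x : ~ List.In s (sp x) -> c s x = 0.
Proof. by case: g => _ [_ [_ [_ [_ H]]]]; apply: H. Qed.
Lemma ghomog0 u v y : c u y = y -> u <> v -> c v y = 0.
Proof. by move=> hy huv; rewrite -hy gcorth. Qed.
Lemma gcsum (T : Type) t (l : seq T) (F : T -> M) :
  c t (\sum_(s <- l) F s) = \sum_(s <- l) c t (F s).
Proof. exact: sum_hom (gcD t). Qed.
Lemma ghomog_or u t y : c u y = y -> c t y = y \/ c t y = 0.
Proof.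
move=> hy; case: (classic (u = t)) => [<-|ne]; first by left.
by right; apply: ghomog0 hy ne.
Qed.
End Graded.

Lemma shift_comp (G : grp) (M N : zmodType) cM sM cN sN
  (gM : graded_axioms cM sM) (gN : graded_axioms cN sN) (f : M -> N)
  (fD : forall x y, f (x + y) = f x + f y) (phi : G -> G)
  (phi_inj : forall u v, phi u = phi v -> u = v)
  (fdeg : forall u x, cM u x = x -> cN (phi u) (f x) = f x) t x :
  cN (phi t) (f x) = f (cM t x).
Proof.
rewrite {1}(gdec gM x) (sum_hom _ _ fD) (gcsum gN).
rewrite (@sum_single _ _ _ (fun s => cN (phi t) (f (cM s x))) t (gnodup gM x)).
- by rewrite fdeg // (gcc gM).
- move=> s ne; apply: (ghomog0 gN (u := phi s)); first by apply: fdeg; rewrite (gcc gM).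
  by move=> e; apply: ne; apply: phi_inj.
- by move=> nin; rewrite (gnin gM nin) (hom0 fD) (gc0 gN).
Qed.

Definition tcast (T U : Type) (e : T = U) (x : T) : U :=
  match e in _ = U' return U' with erefl => x end.

Lemma tcast_tcast (T U V : Type) (e1 : T = U) (e2 : U = V) x :
  tcast e2 (tcast e1 x) = tcast (etrans e1 e2) x.
Proof. by case: V / e2; case: U / e1. Qed.

Lemma tcast_irr (T U : Type) (e1 e2 : T = U) x : tcast e1 x = tcast e2 x.
Proof. by rewrite (proof_irrelevance _ e1 e2). Qed.

Lemma tcast_id (T : Type) (e : T = T) x : tcast e x = x.
Proof. by rewrite (proof_irrelevance _ e erefl). Qed.

Section Casts.
Variables (Gam : grp) (R : grring Gam).

Lemma ocast_tcast (M N : grmod R) (e : M = N) (x : M) :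
  ocast e x = tcast (f_equal (fun X : grmod R => (mcar X : Type)) e) x.
Proof. by case: N / e. Qed.

Lemma ocastD (M N : grmod R) (e : M = N) x y : ocast e (x + y) = ocast e x + ocast e y.
Proof. by case: N / e. Qed.
Lemma ocast0 (M N : grmod R) (e : M = N) : ocast e 0 = 0.
Proof. by case: N / e. Qed.
Lemma ocast_mact (M N : grmod R) (e : M = N) a x : ocast e (mact M a x) = mact N a (ocast e x).
Proof. by case: N / e. Qed.
Lemma ocast_comp (M N : grmod R) (e : M = N) t x : ocast e (mcomp M t x) = mcomp N t (ocast e x).
Proof. by case: N / e. Qed.
Lemma ocastK (M N : grmod R) (e : M = N) x : ocast e (ocast (esym e) x) = x.
Proof. by case: N / e in x *. Qed.
Lemma ocastKV (M N : grmod R) (e : M = N) x : ocast (esym e) (ocast e x) = x.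
Proof. by case: N / e in x *. Qed.
Lemma ocast_inj (M N : grmod R) (e : M = N) x y : ocast e x = ocast e y -> x = y.
Proof. by case: N / e in x y *. Qed.

Definition idhom (M : grmod R) : grhom M M :=
  @GrHom Gam R M M id (fun x y => erefl) (fun a x => erefl) (fun t x h => h).

Section Comp.
Variables (M N L : grmod R) (f : grhom M N) (g : grhom N L).
Lemma gcomp_add x y : g (f (x + y)) = g (f x) + g (f y).
Proof. by rewrite !hadd. Qed.
Lemma gcomp_lin a x : g (f (mact M a x)) = mact L a (g (f x)).
Proof. by rewrite !hlin. Qed.
Lemma gcomp_deg t x : mcomp M t x = x -> mcomp L t (g (f x)) = g (f x).
Proof. by move=> h; apply: hdeg; apply: hdeg. Qed.
Definition gcomp : grhom M L := @GrHom Gam R M L (fun x => g (f x)) gcomp_add gcomp_lin gcomp_deg.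
End Comp.
End Casts.

Section Functor.
Variables (Gam : grp) (A B : grring Gam) (H : grfunctor A B).

Lemma fmor_ext (M N : grmod A) (f g : grhom M N) :
  (forall x, f x = g x) -> forall y, fmor H f y = fmor H g y.
Proof.
move=> e y; rewrite (@fcomp _ _ _ H M M N (idhom M) g f e y).
by rewrite (@fid _ _ _ H M (idhom M)).
Qed.

Lemma fmor_zero (M N : grmod A) (f : grhom M N) :
  (forall x, f x = 0) -> forall y, fmor H f y = 0.
Proof.
move=> e y; have hx : forall x, f x = f x + f x by move=> x; rewrite e addr0.
have h := @fadd _ _ _ H M N f f f hx y.
by apply: (addrI (fmor H f y)); rewrite addr0 -h.
Qed.

Lemma fmor_src (X Y N : grmod A) (E : X = Y) (f : grhom X N) (g : grhom Y N) :
  (forall x, f x = g (ocast E x)) ->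
  forall y, fmor H f y = fmor H g (ocast (f_equal (fobj H) E) y).
Proof. by case: Y / E g => g e y; apply: fmor_ext. Qed.

Lemma fmor_tgt (M X Y : grmod A) (E : X = Y) (f : grhom M X) (g : grhom M Y) :
  (forall x, ocast E (f x) = g x) ->
  forall y, ocast (f_equal (fobj H) E) (fmor H f y) = fmor H g y.
Proof. by case: Y / E g => g e y; apply: fmor_ext. Qed.

Lemma fmor_comp (M N L : grmod A) (f : grhom M N) (g : grhom N L) y :
  fmor H (gcomp f g) y = fmor H g (fmor H f y).
Proof. exact: fcomp. Qed.
End Functor.

Lemma nat_inv (Gam : grp) (A : grring Gam) (Hf : grmod A -> grmod A)
  (Hm : forall M N, grhom M N -> grhom (Hf M) (Hf N))
  (eta : forall M, grhom (Hf M) M) (eta' : forall M, grhom M (Hf M)) :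
  (forall M x, eta M (eta' M x) = x) -> (forall M x, eta' M (eta M x) = x) ->
  (forall M N (f : grhom M N) x, f (eta M x) = eta N (Hm M N f x)) ->
  forall M N (f : grhom M N) y, Hm M N f (eta' M y) = eta' N (f y).
Proof.
by move=> h1 h2 hn M N f y; rewrite -{2}(h1 M y) hn h2.
Qed.

Section SuspEq.
Variables (Gam : grp) (R : grring Gam).

Lemma grmod_eq (car : zmodType) act c1 c2 s1 s2 g1 g2 dl dr aa h1 h2 u tf :
  c1 = c2 -> s1 = s2 ->
  @GrMod Gam R car act c1 s1 g1 dl dr aa h1 u tf =
  @GrMod Gam R car act c2 s2 g2 dl dr aa h2 u tf.
Proof.
move=> e1 e2; subst; f_equal; apply: proof_irrelevance.
Qed.

Lemma susp_susp (M : grmod R) a b c :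
  (forall t, gmul (gmul t b) a = gmul t c) -> susp (susp M a) b = susp M c.
Proof.
move=> H; apply: grmod_eq.
  by apply: functional_extensionality => t; apply: functional_extensionality => x;
     rewrite /susp_comp /=; rewrite /susp_comp H.
apply: functional_extensionality => x; rewrite /susp_supp /= -map_comp.
apply: eq_map => r /=.
have := H (gmul (gmul r (ginv a)) (ginv b)); rewrite !gmulVK => e.
by rewrite [in RHS]e gmulKV.
Qed.

Lemma susp_susp_id (M : grmod R) a b :
  (forall t, gmul (gmul t b) a = t) -> susp (susp M a) b = M.
Proof.
case: M => car act c s g dl dr aa h u tf H; apply: grmod_eq.
  by apply: functional_extensionality => t; apply: functional_extensionality => x;
     rewrite /susp_comp /=; rewrite /susp_comp H.
apply: functional_extensionality => x; rewrite /susp_supp /= -map_comp.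
rewrite -[RHS]map_id; apply: eq_map => r /=.
have := H (gmul (gmul r (ginv a)) (ginv b)); rewrite !gmulVK => e.
by rewrite -e.
Qed.
End SuspEq.

Lemma ginvM (Gam : grp) (s u : Gam) : ginv (gmul s u) = gmul (ginv u) (ginv s).
Proof.
have h : gmul (gmul (ginv u) (ginv s)) (gmul s u) = g1 Gam.
  by rewrite gmulA -(gmulA _ (ginv s) s) gmulVg gmulg1 gmulVg.
by rewrite -[LHS]gmul1g -h gmulKV.
Qed.

Section Ring.
Variables (Gam : grp) (S : grring Gam).
Lemma rmulr0 (x : S) : rmul x 0 = 0.
Proof. exact: (hom0 (@rmulDr _ S x)). Qed.
Lemma rmul0r (x : S) : rmul 0 x = 0.
Proof. exact: (hom0 (fun a b => @rmulDl _ S a b x)). Qed.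
Lemma rmul_suml (T : Type) (l : seq T) (F : T -> S) (c : S) :
  rmul (\sum_(t <- l) F t) c = \sum_(t <- l) rmul (F t) c.
Proof. exact: (sum_hom _ _ (fun a b => @rmulDl _ S a b c)). Qed.
Lemma rmul_sumr (T : Type) (l : seq T) (F : T -> S) (c : S) :
  rmul c (\sum_(t <- l) F t) = \sum_(t <- l) rmul c (F t).
Proof. exact: (sum_hom _ _ (@rmulDr _ S c)). Qed.
End Ring.

Section Mod.
Variables (Gam : grp) (R : grring Gam) (M : grmod R).
Lemma mact0 (a : R) : mact M a 0 = 0.
Proof. exact: (hom0 (@mactDr _ _ M a)). Qed.
Lemma mact_sumr (T : Type) (l : seq T) (F : T -> M) (a : R) :
  mact M a (\sum_(t <- l) F t) = \sum_(t <- l) mact M a (F t).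
Proof. exact: (sum_hom _ _ (@mactDr _ _ M a)). Qed.
Lemma mact_suml (T : Type) (l : seq T) (F : T -> R) (m : M) :
  mact M (\sum_(t <- l) F t) m = \sum_(t <- l) mact M (F t) m.
Proof. exact: (sum_hom _ _ (fun a b => @mactDl _ _ M a b m)). Qed.
Lemma hom_comp (N : grmod R) (f : grhom M N) t x : mcomp N t (f x) = f (mcomp M t x).
Proof.
exact: (@shift_comp Gam M N _ _ _ _ (mgraded M) (mgraded N) f (@hadd _ _ M N f) id
          (fun u v e => e) (fun u x h => hdeg f h) t x).
Qed.
End Mod.

Section Ract.
Variables (Gam : grp) (R S : grring Gam) (iS : ring_idempotent S) (tS : torsionfree S)
  (H : grfunctor S R).

Notation regS := (regmod iS tS).
Notation P := (fobj H regS).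

Definition cst s (p : P) : fobj H (susp regS (ginv s)) :=
  ocast (esym (fsusp H regS (ginv s))) p.

Definition T s (b : S) (p : P) : P := fmor H (rho_comp iS tS b s) (cst s p).

Lemma ractE0 (p : P) (b : S) : ract p b = \sum_(s <- rsupp b) T s b p.
Proof. by []. Qed.

Lemma T_bD s b c p : T s (b + c) p = T s b p + T s c p.
Proof.
apply: fadd => x /=.
by rewrite (gcD (rgraded S)) rmulDr.
Qed.

Lemma T_b0 s b p : rcomp s b = 0 -> T s b p = 0.
Proof.
move=> h; apply: fmor_zero => x /=; by rewrite h rmulr0.
Qed.

Lemma T_ext s b c p : rcomp s b = rcomp s c -> T s b p = T s c p.
Proof. by move=> h; apply: fmor_ext => x /=; rewrite h. Qed.

Lemma T_pD s b p q : T s b (p + q) = T s b p + T s b q.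
Proof. by rewrite /T /cst ocastD hadd. Qed.

Lemma T_bsum s (U : Type) (l : seq U) (F : U -> S) p :
  T s (\sum_(t <- l) F t) p = \sum_(t <- l) T s (F t) p.
Proof. exact: (@sum_hom _ _ _ (fun b => T s b p) l F (fun b c => T_bD s b c p)). Qed.

Lemma T_psum s b (U : Type) (l : seq U) (F : U -> P) :
  T s b (\sum_(t <- l) F t) = \sum_(t <- l) T s b (F t).
Proof. exact: (@sum_hom _ _ _ (T s b) l F (T_pD s b)). Qed.

Lemma ract_cover l b p : List.NoDup l -> (forall s, ~ List.In s l -> rcomp s b = 0) ->
  \sum_(s <- l) T s b p = \sum_(t <- rsupp b) T t (rcomp t b) p.
Proof.
move=> nd cov.
under eq_bigr => s _ do rewrite {1}(gdec (rgraded S) b) T_bsum.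
rewrite exchange_big /=; apply: eq_bigr => t _.
apply: sum_single => //.
  by move=> s ne; apply: T_b0; apply: (gcorth (rgraded S)) => e; apply: ne.
by move=> nin; apply: T_b0; rewrite (gcc (rgraded S)) cov.
Qed.

Lemma ractE (p : P) (b : S) : ract p b = \sum_(t <- rsupp b) T t (rcomp t b) p.
Proof.
rewrite ractE0; apply: ract_cover; first exact: (gnodup (rgraded S)).
by move=> s; apply: (gnin (rgraded S)).
Qed.

Lemma ract_cov l (b : S) (p : P) : List.NoDup l -> (forall s, ~ List.In s l -> rcomp s b = 0) ->
  ract p b = \sum_(s <- l) T s b p.
Proof. by move=> nd cov; rewrite ractE ract_cover. Qed.

Lemma ract_homog s (b : S) (p : P) : rcomp s b = b -> ract p b = T s b p.
Proof.
move=> hb; rewrite (@ract_cov [:: s]) ?big_seq1 //.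
  by constructor; [|constructor].
move=> s' /= nin; apply: (ghomog0 (rgraded S) hb) => e; apply: nin; by left.
Qed.

Lemma ract_bD (p : P) (b c : S) : ract p (b + c) = ract p b + ract p c.
Proof.
have [l [nd hl]] := dedup_ex (List.app (rsupp b) (rsupp c)).
have cb : forall s, ~ List.In s l -> rcomp s b = 0.
  by move=> s nin; apply: (gnin (rgraded S)) => h; apply: nin; apply/hl; apply: List.in_or_app; left.
have cc : forall s, ~ List.In s l -> rcomp s c = 0.
  by move=> s nin; apply: (gnin (rgraded S)) => h; apply: nin; apply/hl; apply: List.in_or_app; right.
rewrite (@ract_cov l b) // (@ract_cov l c) // (@ract_cov l (b + c)) //.
  by rewrite -big_split; apply: eq_bigr => s _; rewrite T_bD.
by move=> s nin; rewrite (gcD (rgraded S)) cb ?cc ?addr0.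
Qed.

Lemma ract_pD (p q : P) (b : S) : ract (p + q) b = ract p b + ract q b.
Proof. by rewrite !ractE0 -big_split; apply: eq_bigr => s _; rewrite T_pD. Qed.

Lemma ract_b0 (p : P) : ract p 0 = 0.
Proof. exact: (hom0 (ract_bD p)). Qed.
Lemma ract_p0 (b : S) : ract (0 : P) b = 0.
Proof. exact: (hom0 (fun p q => ract_pD p q b)). Qed.
Lemma ract_pN (p : P) (b : S) : ract (- p) b = - ract p b.
Proof. exact: (homN (fun p q => ract_pD p q b)). Qed.

Lemma ract_bsum (p : P) (U : Type) (l : seq U) (F : U -> S) :
  ract p (\sum_(t <- l) F t) = \sum_(t <- l) ract p (F t).
Proof. exact: (@sum_hom _ _ _ (ract p) l F (ract_bD p)). Qed.
Lemma ract_psum (b : S) (U : Type) (l : seq U) (F : U -> P) :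
  ract (\sum_(t <- l) F t) b = \sum_(t <- l) ract (F t) b.
Proof. exact: (@sum_hom _ _ _ (fun p => ract p b) l F (fun p q => ract_pD p q b)). Qed.

Lemma ract_mact (a : R) (p : P) (b : S) : mact P a (ract p b) = ract (mact P a p) b.
Proof.
rewrite !ractE0 mact_sumr; apply: eq_bigr => s _.
by rewrite /T -hlin /cst ocast_mact.
Qed.

Lemma T_deg s t (p : P) (b : S) : mcomp P s p = p -> mcomp P (gmul s t) (T t b p) = T t b p.
Proof.
move=> hp; apply: hdeg; rewrite /cst -ocast_comp /=; congr ocast.
by rewrite /susp_comp gmulKV.
Qed.

Lemma ract_deg s t (p : P) (b : S) : mcomp P s p = p -> rcomp t b = b ->
  mcomp P (gmul s t) (ract p b) = ract p b.
Proof. by move=> hp hb; rewrite (ract_homog _ hb); apply: T_deg. Qed.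
End Ract.

Section Ract2.
Variables (Gam : grp) (R S : grring Gam) (iS : ring_idempotent S) (tS : torsionfree S)
  (H : grfunctor S R).

Notation regS := (regmod iS tS).
Notation P := (fobj H regS).

Lemma T_assoc s u (b c : S) (p : P) : rcomp s b = b -> rcomp u c = c ->
  T u c (T s b p) = T (gmul s u) (rmul b c) p.
Proof.
move=> hb hc.
have e1 : cst u (fmor H (rho_comp iS tS b s) (cst s p)) =
  fmor H (susp_hom (rho_comp iS tS b s) (ginv u))
     (ocast (esym (fsusp H (susp regS (ginv s)) (ginv u))) (cst s p)).
  by rewrite fsusp_hom ocastK.
rewrite /T e1 -fmor_comp.
have hyp : forall t, gmul (gmul t (ginv u)) (ginv s) = gmul t (ginv (gmul s u)).
  by move=> t; rewrite ginvM gmulA.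
rewrite (@fmor_src _ _ _ H _ _ _ (susp_susp regS hyp) _ (rho_comp iS tS (rmul b c) (gmul s u))).
  congr (fmor H _ _); rewrite /cst !ocast_tcast !tcast_tcast; apply: tcast_irr.
move=> x /=; rewrite ocast_tcast tcast_id hb hc rmul_hom //.
by rewrite rmulA.
Qed.

Lemma ract_assoc (p : P) (b c : S) : ract (ract p b) c = ract p (rmul b c).
Proof.
transitivity (\sum_(s <- rsupp b) \sum_(u <- rsupp c)
                 ract (ract p (rcomp s b)) (rcomp u c)).
  rewrite {1}(gdec (rgraded S) b) ract_bsum ract_psum; apply: eq_bigr => s _.
  by rewrite {1}(gdec (rgraded S) c) ract_bsum.
rewrite {3}(gdec (rgraded S) b) rmul_suml ract_bsum; apply: eq_bigr => s _.
rewrite {3}(gdec (rgraded S) c) rmul_sumr ract_bsum; apply: eq_bigr => u _.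
have hb := gcc (rgraded S) s b; have hc := gcc (rgraded S) u c.
rewrite (ract_homog _ hb) (ract_homog _ hc) (ract_homog (s := gmul s u)).
  exact: T_assoc.
exact: rmul_hom.
Qed.

Section RhoP.
Variables (b : S) (s : Gam).
Lemma rhoP_add (x y : regS) : rmul (x + y) (rcomp s b) = rmul x (rcomp s b) + rmul y (rcomp s b).
Proof. exact: rmulDl. Qed.
Lemma rhoP_lin (a x : S) : rmul (rmul a x) (rcomp s b) = rmul a (rmul x (rcomp s b)).
Proof. by rewrite rmulA. Qed.
Lemma rhoP_deg t (x : regS) : mcomp regS t x = x ->
  mcomp (susp regS s) t (rmul x (rcomp s b)) = rmul x (rcomp s b).
Proof. by move=> hx; rewrite /= /susp_comp /=; apply: rmul_hom => //; apply: (gcc (rgraded S)). Qed.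
Definition rhoP : grhom regS (susp regS s) :=
  @GrHom Gam S regS (susp regS s) (fun x => rmul x (rcomp s b)) rhoP_add rhoP_lin rhoP_deg.
End RhoP.

Lemma T_rhoP s (b : S) (p : P) :
  T s b p = ocast (f_equal (fobj H) (susp_susp_id regS (fun t => gmulVK t s)))
     (ocast (esym (fsusp H (susp regS s) (ginv s))) (fmor H (rhoP b s) p)).
Proof.
rewrite /T -(@fmor_tgt _ _ _ H _ _ _ (susp_susp_id regS (fun t => gmulVK t s))
   (susp_hom (rhoP b s) (ginv s)) (rho_comp iS tS b s)).
  by rewrite fsusp_hom /cst ocastK.
by move=> x; rewrite ocast_tcast tcast_id.
Qed.

Lemma T_rhoP0 s (b : S) (p : P) : T s b p = 0 <-> fmor H (rhoP b s) p = 0.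
Proof.
rewrite T_rhoP; split => h.
  by apply: (ocast_inj (e := esym (fsusp H (susp regS s) (ginv s))));
     apply: (ocast_inj (e := f_equal (fobj H) (susp_susp_id regS (fun t => gmulVK t s))));
     rewrite h !ocast0.
by rewrite h !ocast0.
Qed.
End Ract2.

Lemma grhom0 (Gam : grp) (R : grring Gam) (M N : grmod R) (f : grhom M N) : f 0 = 0.
Proof. exact: (hom0 (@hadd _ _ _ _ f)). Qed.

Section ActMap.
Variables (Gam : grp) (R : grring Gam) (iR : ring_idempotent R) (tR : torsionfree R)
  (M : grmod R) (m : M) (t : Gam) (hm : mcomp M t m = m).
Lemma actmap_add (x y : R) : mact M (x + y) m = mact M x m + mact M y m.
Proof. exact: mactDl. Qed.
Lemma actmap_lin (a x : R) : mact M (rmul a x) m = mact M a (mact M x m).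
Proof. exact: mactA. Qed.
Lemma actmap_deg r (a : susp (regmod iR tR) (ginv t)) :
  mcomp (susp (regmod iR tR) (ginv t)) r a = a -> mcomp M r (mact M a m) = mact M a m.
Proof.
move=> ha; have := @mact_hom _ _ M (gmul r (ginv t)) t a m ha hm.
by rewrite gmulVK.
Qed.
Definition actmap : grhom (susp (regmod iR tR) (ginv t)) M :=
  @GrHom Gam R (susp (regmod iR tR) (ginv t)) M (fun a => mact M a m)
    actmap_add actmap_lin actmap_deg.
End ActMap.

Section Faithful.
Variables (Gam : grp) (R S : grring Gam) (H : grfunctor S R) (K : grfunctor R S).
Hypothesis isoR : @nat_iso_id Gam R (fun M => fobj H (fobj K M)) (fun M N f => fmor H (fmor K f)).

Lemma faithful (M N : grmod R) (u : grhom M N) :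
  (forall y, fmor K u y = 0) -> forall x, u x = 0.
Proof.
case: isoR => eta [eta' [h1 h2 hn]] hu x.
rewrite -(h1 M x) hn (@fmor_zero _ _ _ H _ _ (fmor K u) hu).
exact: grhom0.
Qed.
End Faithful.

Section Torsion.
Variables (Gam : grp) (R S : grring Gam) (iR : ring_idempotent R) (tR : torsionfree R)
  (iS : ring_idempotent S) (tS : torsionfree S)
  (H : grfunctor S R) (K : grfunctor R S).
Hypothesis isoS : @nat_iso_id Gam S (fun M => fobj K (fobj H M)) (fun M N f => fmor K (fmor H f)).
Hypothesis isoR : @nat_iso_id Gam R (fun M => fobj H (fobj K M)) (fun M N f => fmor H (fmor K f)).

Notation regS := (regmod iS tS).
Notation P := (fobj H regS).

Lemma homog_tf t (p : P) : mcomp P t p = p ->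
  (forall s (b : S), fmor H (rhoP iS tS b s) p = 0) -> p = 0.
Proof.
move=> hp hz.
have gz : forall w, fmor K (actmap iR tR hp) w = 0.
  move=> w; case: isoS => eta [eta' [h1 h2 hn]].
  set y := eta regS (fmor K (actmap iR tR hp) w).
  have hy : forall s (b : S), rmul y (rcomp s b) = 0.
    move=> s b; rewrite -[LHS]/(rhoP iS tS b s y) /y hn -fmor_comp.
    rewrite (@fmor_zero _ _ _ K _ _ (gcomp (actmap iR tR hp) (fmor H (rhoP iS tS b s)))).
      exact: (grhom0 (eta (susp regS s))).
    by move=> a /=; rewrite hlin hz mact0.
  have y0 : y = 0.
    apply: (proj2 tS) => c; rewrite (gdec (rgraded S) c) rmul_sumr.
    by apply: sum_In0 => s _; apply: hy.
  by rewrite -(h2 _ (fmor K _ w)) -/y y0 grhom0.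
have := faithful isoR gz => ga.
by apply: (@mtf _ _ P) => a; apply: ga.
Qed.

Lemma right_tf (p : P) : (forall b : S, ract p b = 0) -> p = 0.
Proof.
move=> hp.
have h1 : forall s (b : S), fmor H (rhoP iS tS b s) p = 0.
  move=> s b; apply/T_rhoP0.
  rewrite (@T_ext _ _ _ _ _ _ s b (rcomp s b)); last by rewrite (gcc (rgraded S)).
  by rewrite -(ract_homog _ (gcc (rgraded S) s b)) hp.
rewrite (gdec (mgraded P) p); apply: sum_In0 => t _.
apply: (@homog_tf t); first exact: (gcc (mgraded P)).
by move=> s b; rewrite -hom_comp h1 (gc0 (mgraded _)).
Qed.
End Torsion.

Record subm (Gam : grp) (R : grring Gam) (M : grmod R) := Subm {
  sp : M -> Prop;
  sp0 : sp 0;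
  spD : forall x y, sp x -> sp y -> sp (x + y);
  spN : forall x, sp x -> sp (- x);
  spA : forall a x, sp x -> sp (mact M a x);
  spC : forall t x, sp x -> sp (mcomp M t x);
  spT : forall x, (forall a, sp (mact M a x)) -> sp x }.

Section Quot.
Variables (Gam : grp) (R : grring Gam) (M : grmod R) (N : subm M).

Definition cls (x : M) : M -> Prop := fun y => sp N (x - y).
Definition rep (x : M) : M := epsilon (inhabits (0 : M)) (cls x).

Lemma rep_rel x : sp N (x - rep x).
Proof. by apply: (epsilon_spec (inhabits (0 : M)) (cls x)); exists x; rewrite /cls subrr; apply: sp0. Qed.

Lemma sp_sub x y z : sp N (x - y) -> sp N (y - z) -> sp N (x - z).
Proof. by move=> h1 h2; have := spD h1 h2; rewrite addrA subrK. Qed.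

Lemma sp_sym x y : sp N (x - y) -> sp N (y - x).
Proof. by move=> h; have := spN h; rewrite opprB. Qed.

Lemma rep_eq x y : sp N (x - y) -> rep x = rep y.
Proof.
move=> h; rewrite /rep; congr epsilon; apply: functional_extensionality => z.
apply: propositional_extensionality; rewrite /cls; split => hz.
  exact: sp_sub (sp_sym h) hz.
exact: sp_sub h hz.
Qed.

Lemma rep_inv x y : rep x = rep y -> sp N (x - y).
Proof. by move=> e; apply: sp_sub (rep_rel x) _; rewrite e; apply: sp_sym; apply: rep_rel. Qed.

Lemma rep_idem x : rep (rep x) == rep x.
Proof. by apply/eqP; apply: rep_eq; apply: sp_sym; apply: rep_rel. Qed.

Definition Xt := {x : M | rep x == x}.
HB.instance Definition _ := Choice.on Xt.

Definition mk (x : M) : Xt := exist _ (rep x) (rep_idem x).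

Lemma mk_eq x y : sp N (x - y) -> mk x = mk y.
Proof. by move=> h; apply: val_inj; rewrite /= (rep_eq h). Qed.
Lemma mk_inv x y : mk x = mk y -> sp N (x - y).
Proof. by move=> e; apply: rep_inv; have := f_equal val e. Qed.
Lemma mk_val (q : Xt) : mk (val q) = q.
Proof. by apply: val_inj => /=; apply/eqP; case: q. Qed.
Lemma mk_surj (q : Xt) : exists x, q = mk x.
Proof. by exists (val q); rewrite mk_val. Qed.
Lemma mk_rep x : mk (rep x) = mk x.
Proof. by apply: mk_eq; apply: sp_sym; apply: rep_rel. Qed.

Definition qadd (q r : Xt) := mk (val q + val r).
Definition qopp (q : Xt) := mk (- val q).
Definition qzero := mk 0.

Lemma mk_add x y : qadd (mk x) (mk y) = mk (x + y).
Proof.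
apply: mk_eq => /=.
have := spD (sp_sym (rep_rel x)) (sp_sym (rep_rel y)).
by rewrite opprD addrACA.
Qed.
Lemma mk_opp x : qopp (mk x) = mk (- x).
Proof. by apply: mk_eq => /=; have := spN (sp_sym (rep_rel x)); rewrite opprB opprK addrC. Qed.

Lemma qaddA : associative qadd.
Proof.
move=> q r w; have [x ->] := mk_surj q; have [y ->] := mk_surj r; have [z ->] := mk_surj w.
by rewrite !mk_add addrA.
Qed.
Lemma qaddC : commutative qadd.
Proof. by move=> q r; have [x ->] := mk_surj q; have [y ->] := mk_surj r; rewrite !mk_add addrC. Qed.
Lemma qadd0 : left_id qzero qadd.
Proof. by move=> q; have [x ->] := mk_surj q; rewrite /qzero mk_add add0r. Qed.
Lemma qaddN : left_inverse qzero qopp qadd.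
Proof. by move=> q; have [x ->] := mk_surj q; rewrite mk_opp mk_add addNr. Qed.

HB.instance Definition _ := GRing.isZmodule.Build Xt qaddA qaddC qadd0 qaddN.
End Quot.

Section QuotMod.
Variables (Gam : grp) (R : grring Gam) (iR : ring_idempotent R) (M : grmod R) (N : subm M).

Notation mk := (mk N).
Notation X := (Xt N).

Lemma mkD x y : mk (x + y) = mk x + mk y.
Proof. by rewrite -mk_add. Qed.
Lemma mk0 : mk 0 = 0.
Proof. by []. Qed.
Lemma mk_sum (U : Type) (l : seq U) (F : U -> M) : mk (\sum_(u <- l) F u) = \sum_(u <- l) mk (F u).
Proof. exact: (@sum_hom _ _ _ mk l F mkD). Qed.
Lemma mk_surj' (q : X) : exists x, q = mk x.
Proof. exact: mk_surj. Qed.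

Lemma mk_mact a x y : mk x = mk y -> mk (mact M a x) = mk (mact M a y).
Proof.
move=> /mk_inv h; apply: mk_eq.
by rewrite -(homN (@mactDr _ _ M a)) -mactDr; apply: spA.
Qed.
Lemma mk_comp t x y : mk x = mk y -> mk (mcomp M t x) = mk (mcomp M t y).
Proof.
move=> /mk_inv h; apply: mk_eq.
by rewrite -(gcN (mgraded M)) -(gcD (mgraded M)); apply: spC.
Qed.

Definition qact (a : R) (q : X) : X := mk (mact M a (val q)).
Definition qcomp t (q : X) : X := mk (mcomp M t (val q)).
Definition qsupp (q : X) : seq Gam := msupp M (val q).

Lemma qact_mk a x : qact a (mk x) = mk (mact M a x).
Proof. by apply: mk_mact; apply: mk_rep. Qed.
Lemma qcomp_mk t x : qcomp t (mk x) = mk (mcomp M t x).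
Proof. by apply: mk_comp; apply: mk_rep. Qed.

Lemma qgraded : graded_axioms qcomp qsupp.
Proof.
split; [|split; [|split; [|split; [|split]]]].
- move=> s q r; have [x ->] := mk_surj' q; have [y ->] := mk_surj' r.
  by rewrite -mkD !qcomp_mk (gcD (mgraded M)) mkD.
- by move=> s q; have [x ->] := mk_surj' q; rewrite !qcomp_mk (gcc (mgraded M)).
- move=> s t q ne; have [x ->] := mk_surj' q.
  by rewrite !qcomp_mk (gcorth (mgraded M)) // mk0.
- move=> q; transitivity (mk (\sum_(s <- qsupp q) mcomp M s (val q))).
    by rewrite /qsupp -(gdec (mgraded M)) mk_val.
  by rewrite mk_sum.
- by move=> q; apply: (gnodup (mgraded M)).
- by move=> s q nin; rewrite /qcomp (gnin (mgraded M) nin) mk0.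
Qed.

Lemma qDl (a b : R) (q : X) : qact (a + b) q = qact a q + qact b q.
Proof. by rewrite /qact mactDl mkD. Qed.
Lemma qDr (a : R) (q r : X) : qact a (q + r) = qact a q + qact a r.
Proof.
have [x ->] := mk_surj' q; have [y ->] := mk_surj' r.
by rewrite -mkD !qact_mk mactDr mkD.
Qed.
Lemma qA (a b : R) (q : X) : qact (rmul a b) q = qact a (qact b q).
Proof. by have [x ->] := mk_surj' q; rewrite !qact_mk mactA. Qed.
Lemma qhom s t (a : R) (q : X) : rcomp s a = a -> qcomp t q = q ->
  qcomp (gmul s t) (qact a q) = qact a q.
Proof.
have [x ->] := mk_surj' q; rewrite !qact_mk !qcomp_mk => ha hq.
have e1 := mk_comp (gmul s t) (mk_mact a (esym hq)).
rewrite e1 (@mact_hom _ _ M s t a _ ha (gcc (mgraded M) t x)).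
by apply: mk_mact.
Qed.
Lemma qunital : left_unital qact.
Proof.
move=> q; have [x ->] := mk_surj' q.
have [l ->] := munital x.
exists (map (fun pr => (pr.1, mk pr.2)) l).
by rewrite big_map mk_sum; apply: eq_bigr => pr _ /=; rewrite qact_mk.
Qed.
Lemma qtf : left_torsionfree qact.
Proof.
move=> q; have [x ->] := mk_surj' q => h; rewrite -mk0; apply: mk_eq.
rewrite subr0; apply: spT => a; have := mk_inv (etrans (esym (qact_mk a x)) (h a)).
by rewrite subr0.
Qed.

Definition qmod : grmod R := @GrMod Gam R X qact qcomp qsupp qgraded qDl qDr qA qhom qunital qtf.

Lemma qmap_lin (a : R) (x : M) : mk (mact M a x) = qact a (mk x).
Proof. by rewrite qact_mk. Qed.
Lemma qmap_deg t (x : M) : mcomp M t x = x -> qcomp t (mk x) = mk x.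
Proof. by move=> h; rewrite qcomp_mk h. Qed.
Definition qmap : grhom M qmod := @GrHom Gam R M qmod mk mkD qmap_lin qmap_deg.

Lemma qmap_zero x : qmap x = 0 -> sp N x.
Proof. by move=> h; have := mk_inv (etrans h (esym mk0)); rewrite subr0. Qed.
End QuotMod.

Section Unital.
Variables (Gam : grp) (R S : grring Gam) (iR : ring_idempotent R) (tR : torsionfree R)
  (iS : ring_idempotent S) (tS : torsionfree S)
  (H : grfunctor S R) (K : grfunctor R S).
Hypothesis isoS : @nat_iso_id Gam S (fun M => fobj K (fobj H M)) (fun M N f => fmor K (fmor H f)).
Hypothesis isoR : @nat_iso_id Gam R (fun M => fobj H (fobj K M)) (fun M N f => fmor H (fmor K f)).

Notation regS := (regmod iS tS).
Notation P := (fobj H regS).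

Definition SS (x : P) : Prop := exists l : seq (P * S), x = \sum_(pr <- l) ract pr.1 pr.2.

Lemma SS0 : SS 0.
Proof. by exists [::]; rewrite big_nil. Qed.
Lemma SSD x y : SS x -> SS y -> SS (x + y).
Proof. by move=> [l1 ->] [l2 ->]; exists (l1 ++ l2); rewrite big_cat. Qed.
Lemma SSN x : SS x -> SS (- x).
Proof.
move=> [l ->]; exists (map (fun pr => (- pr.1, pr.2)) l).
by rewrite big_map -sumrN; apply: eq_bigr => pr _ /=; rewrite ract_pN.
Qed.
Lemma SS_act p b : SS (ract p b).
Proof. by exists [:: (p, b)]; rewrite big_seq1. Qed.
Lemma SS_sum (U : Type) (l : seq U) (F : U -> P) : (forall u, SS (F u)) -> SS (\sum_(u <- l) F u).
Proof.
move=> h; elim: l => [|u l IH]; first by rewrite big_nil; apply: SS0.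
by rewrite big_cons; apply: SSD.
Qed.
Lemma SS_homog u t (x : P) : mcomp P u x = x -> SS x -> SS (mcomp P t x).
Proof.
move=> hx hs; case: (ghomog_or (mgraded P) t hx) => ->; [exact: hs | exact: SS0].
Qed.

Definition Spp (x : P) : Prop := forall (a : R) t, SS (mcomp P t (mact P a x)).

Lemma Spp0 : Spp 0.
Proof. by move=> a t; rewrite mact0 (gc0 (mgraded P)); apply: SS0. Qed.
Lemma SppD x y : Spp x -> Spp y -> Spp (x + y).
Proof. by move=> hx hy a t; rewrite mactDr (gcD (mgraded P)); apply: SSD. Qed.
Lemma SppN x : Spp x -> Spp (- x).
Proof.
by move=> hx a t; rewrite (homN (@mactDr _ _ P a)) (gcN (mgraded P)); apply: SSN.
Qed.
Lemma SppA a x : Spp x -> Spp (mact P a x).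
Proof. by move=> hx a' t; rewrite -mactA. Qed.

Lemma act_shift (a : R) r u (x : P) : rcomp r a = a ->
  mcomp P (gmul r u) (mact P a x) = mact P a (mcomp P u x).
Proof.
move=> ha.
apply: (@shift_comp Gam P P _ _ _ _ (mgraded P) (mgraded P) (mact P a) (@mactDr _ _ P a)
          (fun v => gmul r v)).
  by move=> v w e; rewrite -(gmul1g v) -(gmul1g w) -(gmulVg r) -!gmulA e.
by move=> v y hy; apply: mact_hom.
Qed.

Lemma SppC u x : Spp x -> Spp (mcomp P u x).
Proof.
move=> hx a t; rewrite (gdec (rgraded R) a) mact_suml (gcsum (mgraded P)).
apply: SS_sum => r.
rewrite -(@act_shift _ r); last exact: (gcc (rgraded R)).
apply: (SS_homog (u := gmul r u)); first exact: (gcc (mgraded P)).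
exact: hx.
Qed.

Lemma SppT x : (forall a, Spp (mact P a x)) -> Spp x.
Proof.
move=> h a t; have [l ->] := iR a.
rewrite mact_suml (gcsum (mgraded P)); apply: SS_sum => pr.
by rewrite mactA; apply: h.
Qed.

Definition SN : subm P := Subm Spp0 SppD SppN SppA SppC SppT.

Lemma Spp_ract (q : P) s (b : S) : rcomp s b = b -> Spp (ract q b).
Proof.
move=> hb a t; rewrite ract_mact (gdec (mgraded P) (mact P a q)) ract_psum (gcsum (mgraded P)).
apply: SS_sum => r; apply: (SS_homog (u := gmul r s)); last exact: SS_act.
by apply: ract_deg => //; apply: (gcc (mgraded P)).
Qed.

Lemma all_Spp (p : P) : Spp p.
Proof.
set u := qmap SN.
have step1 : forall s (b : S) z, u (fmor H (rho_comp iS tS b s) z) = 0.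
  move=> s b z.
  have -> : fmor H (rho_comp iS tS b s) z = ract (ocast (fsusp H regS (ginv s)) z) (rcomp s b).
    rewrite (ract_homog _ (gcc (rgraded S) s b)) /T /cst ocastKV.
    by apply: fmor_ext => x /=; rewrite (gcc (rgraded S)).
  rewrite /u /= -(mk0 SN); apply: mk_eq; rewrite subr0.
  exact: (Spp_ract _ (gcc (rgraded S) s b)).
case: isoS => eta [eta' [h1 h2 hn]].
have natinv := nat_inv h1 h2 hn.
have step3 : forall s (b : S) (y : S), fmor K u (eta' regS (rmul y (rcomp s b))) = 0.
  move=> s b y.
  have := natinv _ _ (rho_comp iS tS b s) y => /= <-.
  rewrite -fmor_comp; apply: fmor_zero => z /=; exact: step1.
have step4 : forall x : S, fmor K u (eta' regS x) = 0.
  have addK : forall x y : S, fmor K u (eta' regS (x + y)) =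
      fmor K u (eta' regS x) + fmor K u (eta' regS y) by move=> x0 y0; rewrite !hadd.
  move=> x; have [l ->] := iS x.
  rewrite (@sum_hom _ _ _ (fun x => fmor K u (eta' regS x)) l _ addK).
  apply: sum_In0 => pr _; rewrite (gdec (rgraded S) pr.2) rmul_sumr.
  rewrite (@sum_hom _ _ _ (fun x => fmor K u (eta' regS x)) _ _ addK).
  by apply: sum_In0 => s _; apply: step3.
have step5 : forall w, fmor K u w = 0 by move=> w; rewrite -(h2 _ w); apply: step4.
have := faithful isoR step5 p => /qmap_zero.
exact.
Qed.

Lemma right_unit (p : P) : SS p.
Proof.
have [l ->] := munital p.
apply: SS_sum => pr; rewrite (gdec (mgraded P) (mact P pr.1 pr.2)).
apply: SS_sum => t; exact: all_Spp.
Qed.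
End Unital.

Lemma general_side (Gam : grp) (R S : grring Gam) (iR : ring_idempotent R) (tR : torsionfree R)
  (iS : ring_idempotent S) (tS : torsionfree S)
  (H : grfunctor S R) (K : grfunctor R S)
  (isoS : @nat_iso_id Gam S (fun M => fobj K (fobj H M)) (fun M N f => fmor K (fmor H f)))
  (isoR : @nat_iso_id Gam R (fun M => fobj H (fobj K M)) (fun M N f => fmor H (fmor K f))) :
  @gr_bimodule Gam R S (fobj H (regmod iS tS)) (@ract Gam S R iS tS H) /\
  (left_unital (mact (fobj H (regmod iS tS))) /\ left_torsionfree (mact (fobj H (regmod iS tS)))) /\
  (right_unital (@ract Gam S R iS tS H) /\ right_torsionfree (@ract Gam S R iS tS H)).
Proof.
split; last split.
- split.
  + exact: ract_pD.
  + exact: ract_bD.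
  + exact: ract_assoc.
  + by move=> s t p b hp hb; apply: ract_deg.
  + exact: ract_mact.
- by split; [apply: munital | apply: mtf].
- split.
  + move=> p; exact: (right_unit iR isoS isoR p).
  + move=> p; exact: (right_tf iR tR isoS isoR).
Qed.

Unset Implicit Arguments.
Theorem proposition3p6 (Gam : grp) (A B : grring Gam)
  (iA : ring_idempotent A) (tA : torsionfree A)
  (iB : ring_idempotent B) (tB : torsionfree B)
  (F : grfunctor A B) (G : grfunctor B A) :
  inverse_equivalences F G ->
  let P : grmod A := fobj G (regmod iB tB) in
  let Q : grmod B := fobj F (regmod iA tA) in
  let actP : P -> B -> P := @ract Gam B A iB tB G in
  let actQ : Q -> A -> Q := @ract Gam A B iA tA F in
  (@gr_bimodule Gam A B P actP /\
   (left_unital (mact P) /\ left_torsionfree (mact P)) /\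
   (right_unital actP /\ right_torsionfree actP)) /\
  (@gr_bimodule Gam B A Q actQ /\
   (left_unital (mact Q) /\ left_torsionfree (mact Q)) /\
   (right_unital actQ /\ right_torsionfree actQ)).
Proof.
move=> [iso1 iso2] P Q actP actQ; split.
- exact: (@general_side _ _ _ iA tA iB tB G F iso2 iso1).
- exact: (@general_side _ _ _ iB tB iA tA F G iso1 iso2).
Qed.
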